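(* Let $P\in\mathbb{R}[X,Y]$ satisfy: (i) $P(-X,-Y)=P(X,Y)$; (ii) $P(X,Y)=-P(Y,X)$; (iii) $2P(X,Y)=P(Y,-X-Y)-P(X,-X-Y)$; (iv) $\frac{1}{X}P(Y,X-Y)+\frac{1}{Y}P(X,Y-X)=0$ as an identity of rational functions. Then $P=0$. *)

(* Defs.v *)
From HB Require Import structures.
From mathcomp Require Import all_boot all_order all_algebra.
From mathcomp Require Import fraction.
From mathcomp Require Import mpoly.
From mathcomp Require Import reals.
Set Implicit Arguments. Unset Strict Implicit. Unset Printing Implicit Defensive.
Import Order.TTheory GRing.Theory Num.Theory.
Local Open Scope ring_scope.

Definition pX {R : realType} : {mpoly R[2]} := 'X_(0 : 'I_2).
Definition pY {R : realType} : {mpoly R[2]} := 'X_(1 : 'I_2).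

Definition ev2 {R : realType} (P a b : {mpoly R[2]}) : {mpoly R[2]} :=
  P \mPo [tuple a; b].

Definition toRat {R : realType} (p : {mpoly R[2]}) : {fraction {mpoly R[2]}} :=
  tofrac p.

(* Main.v *)
Require Import Defs.
From HB Require Import structures.
From mathcomp Require Import all_boot all_order all_algebra.
From mathcomp Require Import fraction mpoly reals.
From mathcomp Require Import ring.
Import GRing.Theory.
Local Open Scope ring_scope.

Section Aux.
Variable R : realType.
Implicit Types P a b c d : {mpoly R[2]}.

Lemma ev2_comp P a b c d :
  ev2 (ev2 P a b) c d = ev2 P (ev2 a c d) (ev2 b c d).
Proof.
rewrite /ev2 (comp_mpolyEX P) (comp_mpolyEX P [tuple _; _]) raddf_sum /=.
apply: eq_bigr => m _; rewrite linearZ /= !comp_mpolyX rmorph_prod.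
congr (_ *: _); apply: eq_bigr => i _; rewrite rmorphXn; congr (_ ^+ _).
by case: i => [[|[|//]]] ? ; rewrite !(tnth_nth 0).
Qed.

Lemma ev2_0 a b : ev2 0 a b = 0.
Proof. exact: comp_mpoly0. Qed.
Lemma ev2X a b : ev2 pX a b = a.
Proof. by rewrite /ev2 /pX comp_mpolyXU. Qed.
Lemma ev2Y a b : ev2 pY a b = b.
Proof. by rewrite /ev2 /pY comp_mpolyXU. Qed.
Lemma ev2D P Q a b : ev2 (P + Q) a b = ev2 P a b + ev2 Q a b.
Proof. exact: comp_mpolyD. Qed.
Lemma ev2N P a b : ev2 (- P) a b = - ev2 P a b.
Proof. exact: comp_mpolyN. Qed.
Lemma ev2B P Q a b : ev2 (P - Q) a b = ev2 P a b - ev2 Q a b.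
Proof. exact: comp_mpolyB. Qed.
Lemma ev2M P Q a b : ev2 (P * Q) a b = ev2 P a b * ev2 Q a b.
Proof. exact: rmorphM. Qed.
Lemma ev2n P a b (k : nat) : ev2 (k%:R * P) a b = k%:R * ev2 P a b.
Proof. by rewrite ev2M /ev2 rmorph_nat. Qed.
Lemma ev2id P : ev2 P pX pY = P.
Proof.
rewrite -[RHS](comp_mpoly_id P) /ev2; congr comp_mpoly.
apply: eq_from_tnth => i; rewrite tnth_map tnth_ord_tuple.
by case: i => [[|[|//]]] ?; rewrite !(tnth_nth 0).
Qed.

Lemma pY_neq0 : (pY : {mpoly R[2]}) != 0.
Proof.
apply/negP => /eqP h.
have := congr1 (fun p : {mpoly R[2]} => p.@[fun i : 'I_2 => (i : nat)%:R]) h.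
rewrite /pY mevalXU meval0 /= => /eqP. by rewrite oner_eq0.
Qed.

End Aux.

Theorem mainTheorem9 (R : realType) (P : {mpoly R[2]}) :
  ev2 P (- pX) (- pY) = P ->
  P = - ev2 P pY pX ->
  2%:R * P = ev2 P pY (- pX - pY) - ev2 P pX (- pX - pY) ->
  (toRat pX)^-1 * toRat (ev2 P pY (pX - pY))
    + (toRat pY)^-1 * toRat (ev2 P pX (pY - pX)) = 0 ->
  P = 0.
Proof.
move=> h1 h2 h3 h4.
have h1' a b : ev2 P (- a) (- b) = ev2 P a b.
  by have := congr1 (fun q => ev2 q a b) h1; rewrite /= ev2_comp !ev2N ev2X ev2Y.
have h2' a b : ev2 P a b = - ev2 P b a.
  by have := congr1 (fun q => ev2 q a b) h2; rewrite /= ev2N ev2_comp ev2X ev2Y.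
have h3' a b : 2%:R * ev2 P a b = ev2 P b (- a - b) - ev2 P a (- a - b).
  have := congr1 (fun q => ev2 q a b) h3.
  by rewrite /= ev2n ev2B !ev2_comp !ev2B !ev2N !ev2X !ev2Y.
set X : {mpoly R[2]} := pX; set Y : {mpoly R[2]} := pY.
set Z := - X - Y.
have e1 : 2%:R * P = ev2 P Y Z + ev2 P Z X.
  by rewrite h3 (h2' X Z) opprK.
have e2 : 2%:R * ev2 P Y Z = ev2 P Z X + P.
  rewrite h3' (_ : - Y - Z = X); last by rewrite /Z; ring.
  by rewrite (h2' Y X) opprK ev2id.
have sig : ev2 P Y Z = P.
  have h : (3%:R : R) *: (P - ev2 P Y Z) = 0.
    rewrite -mul_mpolyC rmorph_nat.
    have h : 2%:R * P - 2%:R * ev2 P Y Z = ev2 P Y Z - P by rewrite e1 e2; ring.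
    rewrite (_ : 3%:R * (P - ev2 P Y Z) = (2%:R * P - 2%:R * ev2 P Y Z) - (ev2 P Y Z - P)); last by ring.
    by rewrite h subrr.
  move/eqP: h; rewrite scaler_eq0 Num.Theory.pnatr_eq0 /= subr_eq0 => /eqP e; exact: esym e.
have h4' : Y * ev2 P Y (X - Y) + X * ev2 P X (Y - X) = 0.
  have nX : toRat X != 0.
    rewrite /toRat tofrac_eq0; apply/negP => /eqP hX.
    have := congr1 (fun p : {mpoly R[2]} => p.@[fun i : 'I_2 => 1 - (i : nat)%:R]) hX.
    by rewrite /X /pX mevalXU meval0 /= subr0 => /eqP; rewrite oner_eq0.
  have nY : toRat Y != 0 by rewrite /toRat tofrac_eq0 pY_neq0.
  apply/eqP; rewrite -tofrac_eq0; apply/eqP.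
  rewrite tofracD !tofracM.
  have := congr1 (fun f => toRat X * toRat Y * f) h4.
  rewrite /= mulr0 mulrDr => <-.
  have E1 (x y a : {fraction {mpoly R[2]}}) : x != 0 -> x*y*(x^-1*a) = y*a.
    by move=> hx; rewrite [x*y]mulrC -mulrA mulVKf.
  have E2 (x y a : {fraction {mpoly R[2]}}) : y != 0 -> x*y*(y^-1*a) = x*a.
    by move=> hy; rewrite -mulrA mulVKf.
  by rewrite E1 // E2.
have := congr1 (fun q => ev2 q X (X + Y)) h4'.
rewrite /= ev2D !ev2M !ev2_comp !ev2B !ev2X !ev2Y ev2_0.
rewrite (_ : X - (X + Y) = - Y); last by ring.
rewrite (_ : X + Y - X = Y); last by ring.
rewrite ev2id (_ : X + Y = - Z); last by rewrite /Z; ring.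
rewrite h1' h2' sig => h.
have : Y * P = 0.
  by rewrite -oppr0 -h /Z; ring.
by move/eqP; rewrite mulf_eq0 (negbTE (pY_neq0 R)) => /eqP.
Qed.
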